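(* There is an absolute constant $C_0\ge 3\times10^3$ such that the following holds. Let $k\ge2$, $r\ge0$ be integers and $n\ge C_0(r+1)^3(k+r)k^2$. Suppose $\mathcal F\subseteq\binom{[n]}{k}$ has size $|\mathcal F|=\sum_{i=1}^{r}\binom{n-i}{k-1}+\delta\binom{n-(r+1)}{k-1}$ for some $\delta\in\left[\frac{150k^3}{n},1\right]$, and $\mathcal I(\mathcal F)\ge\frac{r+\delta^2}{(r+\delta)^2}|\mathcal F|^2$. Then there exists $x\in[n]$ with $|\mathcal F(x)|\ge\frac{|\mathcal F|}{4(r+1)}$.
   Context: $\mathcal F(x)=\{F\in\mathcal F:x\in F\}$; $\mathcal I(\mathcal F)=\sum_{A,B\in\mathcal F}|A\cap B|=\sum_{x\in[n]}|\mathcal F(x)|^2$ (ordered pairs). *)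

(* Defs.v *)
From mathcomp Require Import all_boot all_order all_algebra.
Set Implicit Arguments. Unset Strict Implicit. Unset Printing Implicit Defensive.

Definition star (n : nat) (F : {set {set 'I_n}}) (x : 'I_n) : {set {set 'I_n}} :=
  [set A in F | x \in A].

Definition Ifam (n : nat) (F : {set {set 'I_n}}) : nat :=
  \sum_(A in F) \sum_(B in F) #|A :&: B|.

(* Main.v *)
Require Import Defs.
From mathcomp Require Import all_boot all_order all_algebra.
From mathcomp Require Import zify ring lra.
Import Order.TTheory GRing.Theory Num.Theory.
Set Implicit Arguments. Unset Strict Implicit. Unset Printing Implicit Defensive.

Lemma card_setP (T : finType) (F : {set T}) (P : pred T) :
  #|[set A in F | P A]| = \sum_(A in F) P A.
Proof.
rewrite -sum1_card big_mkcond [RHS]big_mkcond /=; apply: eq_bigr => A _.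
by rewrite !inE; case: (A \in F); case: (P A).
Qed.

Lemma cardI_sum (T : finType) (A S : {set T}) :
  #|A :&: S| = \sum_(x in S) (x \in A).
Proof.
rewrite -card_setP; apply: eq_card => x; rewrite !inE andbC //.
Qed.

Lemma star_sum n (F : {set {set 'I_n}}) x :
  #|star F x| = \sum_(A in F) (x \in A).
Proof. by rewrite /star card_setP. Qed.

Lemma Ifam_sum n (F : {set {set 'I_n}}) :
  Ifam F = \sum_x #|star F x| ^ 2.
Proof.
rewrite /Ifam.
have E : forall A B : {set 'I_n}, #|A :&: B| = \sum_x ((x \in A) * (x \in B)).
  move=> A B; rewrite -(setIT (A :&: B)) cardI_sum big_mkcond /=.
  by apply: eq_bigr => x _; rewrite !inE; case: (x \in A); case: (x \in B).
under eq_bigr => A _ do under eq_bigr => B _ do rewrite E.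
under eq_bigr => A _ do rewrite exchange_big /=.
rewrite exchange_big /=; apply: eq_bigr => x _.
rewrite star_sum expnS expn1 big_distrl /=; apply: eq_bigr => A _.
by rewrite big_distrr.
Qed.

Lemma sumdeg n k (F : {set {set 'I_n}}) :
  {in F, forall A : {set 'I_n}, #|A| = k} ->
  \sum_x #|star F x| = k * #|F|.
Proof.
move=> HF; rewrite (eq_bigr _ (fun x _ => star_sum F x)).
rewrite exchange_big /=. rewrite -sum1_card. rewrite big_distrr /=; apply: eq_bigr => A HA.
rewrite muln1 -(HF A HA) -sum1_card [RHS]big_mkcond /=; apply: eq_bigr => x _; by case: (x \in A).
Qed.

Definition pd n (F : {set {set 'I_n}}) (x y : 'I_n) :=
  #|[set A in F | (x \in A) && (y \in A)]|.

Lemma pd_le n k (F : {set {set 'I_n}}) x y :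
  {in F, forall A : {set 'I_n}, #|A| = k} -> x != y ->
  pd F x y <= 'C(n - 2, k - 2).
Proof.
move=> HF xy.
set D := [set A in F | (x \in A) && (y \in A)].
set B := ~: [set x; y].
have cB : #|B| = n - 2.
  by rewrite cardsCs setCK cards2 xy card_ord.
rewrite /pd -/D -cB -cards_draws.
rewrite -(@card_in_imset _ _ (fun A => A :\: [set x; y]) D).
  apply: subset_leq_card; apply/subsetP => C /imsetP [A HA ->].
  move: HA; rewrite !inE => /andP [AF /andP [xA yA]].
  have PA : [set x; y] \subset A by rewrite subUset !sub1set xA yA.
  apply/andP; split.
    by apply/subsetP => z; rewrite !inE => /andP [].
  by rewrite cardsD (setIidPr PA) cards2 xy (HF A AF).
move=> A1 A2; rewrite !inE => /andP [_ /andP [xA1 yA1]] /andP [_ /andP [xA2 yA2]] E.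
have PA1 : [set x; y] \subset A1 by rewrite subUset !sub1set xA1 yA1.
have PA2 : [set x; y] \subset A2 by rewrite subUset !sub1set xA2 yA2.
by rewrite -(setID A1 [set x; y]) -(setID A2 [set x; y]) (setIidPr PA1) (setIidPr PA2) E.
Qed.

Lemma bonf n k (F : {set {set 'I_n}}) (S : {set 'I_n}) :
  {in F, forall A : {set 'I_n}, #|A| = k} ->
  \sum_(x in S) #|star F x| <= #|F| + #|S| * #|S| * 'C(n - 2, k - 2).
Proof.
move=> HF; set Q := 'C(n - 2, k - 2).
have E1 : \sum_(x in S) #|star F x| = \sum_(A in F) #|A :&: S|.
  rewrite (eq_bigr _ (fun x _ => star_sum F x)) exchange_big /=.
  by apply: eq_bigr => A _; rewrite cardI_sum.
have E2 : \sum_(A in F) #|A :&: S| ^ 2 = \sum_(x in S) \sum_(y in S) pd F x y.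
  have -> : \sum_(A in F) #|A :&: S| ^ 2
         = \sum_(A in F) \sum_(x in S) \sum_(y in S) ((x \in A) * (y \in A)).
    apply: eq_bigr => A _; rewrite cardI_sum expnS expn1 big_distrl /=.
    by apply: eq_bigr => x _; rewrite big_distrr.
  rewrite exchange_big /=; apply: eq_bigr => x _.
  rewrite exchange_big /=; apply: eq_bigr => y _.
  rewrite /pd card_setP; apply: eq_bigr => A _.
  by case: (x \in A); case: (y \in A).
have E3 : forall x, x \in S -> \sum_(y in S) pd F x y <= #|star F x| + #|S| * Q.
  move=> x xS; rewrite (bigD1 x) //=.
  have -> : pd F x x = #|star F x|.
    by rewrite /pd /star; apply: eq_card => A; rewrite !inE andbb.
  rewrite leq_add2l big_mkcondr /=.
  apply: leq_trans (_ : \sum_(y in S) Q <= _); last by rewrite sum_nat_const.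
  apply: leq_sum => y _; case: eqP => [_|/eqP yx] //.
  by apply: pd_le HF _; rewrite eq_sym.
have E4 : \sum_(A in F) (#|A :&: S| + #|A :&: S|) <= \sum_(A in F) (1 + #|A :&: S| ^ 2).
  by apply: leq_sum => A _; nia.
rewrite big_split /= big_split /= sum1_card E2 -E1 in E4.
have E5 : \sum_(x in S) \sum_(y in S) pd F x y <= \sum_(x in S) (#|star F x| + #|S| * Q).
  by apply: leq_sum => x xS; apply: E3.
rewrite big_split /= sum_nat_const in E5.
rewrite -mulnA; move: E4 E5; set X := \sum_(x in S) #|star F x|; set Y := \sum_(x in S) \sum_(y in S) pd F x y. move=> E4 E5. set Z := #|S| * (#|S| * Q) in E5 *; clear E1 E2 E3; clearbody X Y Z. have E6 : (X + X <= #|F| + Y)%N := E4. have E7 : (Y <= X + Z)%N := E5. clear E4 E5. lia.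
Qed.

Lemma sub_of_size (T : finType) (A : {set T}) s :
  s <= #|A| -> exists S : {set T}, S \subset A /\ #|S| = s.
Proof.
move=> sA; exists [set x in take s (enum A)]; split.
  by apply/subsetP => x; rewrite inE => /mem_take; rewrite mem_enum.
rewrite cardsE (card_uniqP _) ?take_uniq ?enum_uniq // size_take -cardE.
by case: ltnP => //; lia.
Qed.

Local Open Scope ring_scope.
Local Open Scope ring_scope.

Lemma NUM_r0 (k n : nat) (d : rat) : (1 <= k)%N -> (2 <= n)%N ->
  150 * (k ^ 3)%:R / n%:R <= d -> d <= 1 ->
  ((32 * k ^ 2 * (k - 1))%N)%:R < (n - 1)%:R * d.
Proof.
move=> k1 n2 hd1 hd2.
have np : (0 : rat) < n%:R by rewrite ltr0n; lia.
have hdn : 150 * (k ^ 3)%:R <= d * n%:R by rewrite -ler_pdivrMr.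
have K1 : (1 : rat) <= (k ^ 3)%:R by rewrite ler1n expn_gt0 k1.
have kk : (k ^ 2 * (k - 1) <= k ^ 3)%N.
  rewrite (expnSr k 2); apply: leq_mul; [exact: leqnn | exact: leq_subr].
have H1 : ((32 * k ^ 2 * (k - 1))%N)%:R <= 32 * (k ^ 3)%:R :> rat.
  rewrite -mulnA natrM ler_pM2l; [by rewrite ler_nat | by rewrite ltr0n].
have n1 : (1 <= n)%N by apply: ltnW.
rewrite natrB; last exact: n1.
clear hd1 kk.
lra.
Qed.


Lemma NUM_rpos (k r N A : nat) (d : rat) : 0 <= d -> (1 <= r)%N -> (1 <= A)%N ->
  (32 * k ^ 2 * (k - 1) * (r + 1) ^ 2 <= 32 * A)%N -> (33 * A <= N)%N ->
  ((32 * k ^ 2 * (k - 1) * (r + 1) ^ 2)%N)%:R < N%:R * (r%:R + d).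
Proof.
move=> d0 r1 A1 HW HA.
have H1 : (32 * k ^ 2 * (k - 1) * (r + 1) ^ 2 < N)%N by lia.
have H2 : (N <= N * r)%N by rewrite leq_pmulr.
have H3 : ((32 * k ^ 2 * (k - 1) * (r + 1) ^ 2)%N)%:R < (N * r)%N%:R :> rat.
  rewrite ltr_nat; exact: leq_trans H1 H2.
rewrite natrM in H3.
have : 0 <= N%:R * d :> rat by apply: mulr_ge0; [exact: ler0n | exact: d0].
lra.
Qed.

Lemma nat_facts (k r n : nat) : (2 <= k)%N ->
  (3000 * ((r + 1) ^ 3 * (k + r) * k ^ 2) <= n)%N ->
  [/\ (33 * ((r + 1) ^ 2 * k ^ 3) <= n - (r + 1))%N,
      (2 * (r * (k - 2)) <= n - (r + 1))%N,
      (k - 1 <= n - (r + 1))%N, (r + 2 <= n)%N & (1 <= (r + 1) ^ 2 * k ^ 3)%N].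
Proof.
move=> k2 Hn.
set A := ((r + 1) ^ 2 * k ^ 3)%N.
have k3 : (k <= k ^ 3)%N.
  rewrite (expnSr k 2); apply: leq_pmull; rewrite expn_gt0; apply/orP; left; lia.
have kA : (k <= A)%N.
  apply: leq_trans k3 _; rewrite /A; apply: leq_pmull; rewrite expn_gt0; apply/orP; left; lia.
have AA : ((r + 1) * A <= (r + 1) ^ 3 * (k + r) * k ^ 2)%N.
  have -> : ((r + 1) * A = (r + 1) ^ 3 * k * k ^ 2)%N by rewrite /A; lia.
  apply: leq_mul; [|exact: leqnn]; apply: leq_mul; [exact: leqnn | exact: leq_addr].
have B1 : (r + 1 <= (r + 1) * A)%N by apply: leq_pmulr; lia.
have B2 : (A <= (r + 1) * A)%N by apply: leq_pmull; rewrite addn1.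
have B3 : (r * (k - 2) <= (r + 1) * A)%N.
  apply: leq_mul; [exact: leq_addr | apply: leq_trans kA; exact: leq_subr].
move: Hn AA B1 B2 B3 kA.
set T := ((r + 1) ^ 3 * (k + r) * k ^ 2)%N.
set B := ((r + 1) * A)%N.
set R := (r * (k - 2))%N.
clearbody T B R A => Hn AA B1 B2 B3 kA.
split; lia.
Qed.

Lemma WA_fact (k r : nat) :
  (32 * k ^ 2 * (k - 1) * (r + 1) ^ 2 <= 32 * ((r + 1) ^ 2 * k ^ 3))%N.
Proof.
have kk : (k ^ 2 * (k - 1) <= k ^ 3)%N.
  rewrite (expnSr k 2); apply: leq_mul; [exact: leqnn | exact: leq_subr].
have -> : (32 * k ^ 2 * (k - 1) * (r + 1) ^ 2 = 32 * ((r + 1) ^ 2 * (k ^ 2 * (k - 1))))%N.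
  move: (k - 1)%N => z; lia.
apply: leq_mul; [exact: leqnn|]; apply: leq_mul; [exact: leqnn| exact: kk].
Qed.

Lemma binrat c b j :
  ('C(c + j, b))%:R * (1 - (j * b)%:R / (c + 1)%:R) <= ('C(c, b))%:R :> rat.
Proof.
elim: j c => [|j IH] c.
  by rewrite addn0 mul0n mul0r subr0 mulr1.
have IH1 := IH c.+1.
rewrite addSn -addnS in IH1.
set X := ('C(c + j.+1, b))%:R : rat in IH1 *.
set Y := ('C(c.+1, b))%:R : rat in IH1.
set Z := ('C(c, b))%:R : rat.
have X0 : 0 <= X by rewrite ler0n.
have Y0 : 0 <= Y by rewrite ler0n.
have Z0 : 0 <= Z by rewrite ler0n.
have cp : (0 : rat) < (c + 1)%:R by rewrite ltr0n addn1.
have step : Y * ((c + 1)%:R - b%:R) <= (c + 1)%:R * Z.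
  have E := mul_bin_down c.+1 b.
  have E' : ((c + 1)%:R * Z : rat) = ((c.+1 - b)%N)%:R * Y.
    by rewrite /Z /Y -!natrM addn1 E.
  rewrite E' mulrC; apply: ler_wpM2r => //.
  have [bc|bc] := leqP b c.+1.
    by rewrite natrB // addn1.
  apply: le_trans (ler0n _ _); rewrite subr_le0 ler_nat; lia.
set x := b%:R / (c + 1)%:R : rat.
set u := (j * b)%:R / (c + 1)%:R : rat.
have u0 : 0 <= u by rewrite /u divr_ge0 ?ler0n // ltW.
have xe : 1 - x = ((c + 1)%:R - b%:R) / (c + 1)%:R.
  by rewrite /x; field; rewrite natr1 pnatr_eq0.
have S1 : Y * (1 - x) <= Z.
  rewrite xe mulrA ler_pdivrMr // mulrC; lra.
have S2 : X * (1 - u) <= Y.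
  apply: le_trans IH1; apply: ler_wpM2l => //.
  rewrite lerD2l lerN2 /u; apply: ler_wpM2l; first by rewrite ler0n.
  by rewrite lef_pV2 ?posrE ?ltr0n ?addn1 // ler_nat.
have -> : (1 - ((j.+1) * b)%:R / (c + 1)%:R : rat) = 1 - u - x.
  by rewrite /u /x mulSn natrD; field; rewrite natr1 pnatr_eq0.
have [x1|x1] := lerP x 1.
  have : X * (1 - u) * (1 - x) <= Y * (1 - x) by apply: ler_wpM2r => //; lra.
  have x0 : 0 <= x by rewrite /x divr_ge0 ?ler0n // ltW.
  have : 0 <= X * u * x by apply: mulr_ge0 => //; apply: mulr_ge0.
  nra.
have : X * (1 - u - x) <= 0 by rewrite mulr_ge0_le0 //; lra.
lra.
Qed.

Lemma KF_lemma (k r n : nat) (delta m : rat) :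
  (2 <= k)%N -> (3000 * ((r + 1) ^ 3 * (k + r) * k ^ 2) <= n)%N ->
  150 * (k ^ 3)%:R / n%:R <= delta -> delta <= 1 ->
  (r%:R + delta) * ('C(n - (r + 1), k - 1))%:R <= m ->
  ((16 * k ^ 2 * (r + 1) ^ 2)%N)%:R * ('C(n - 2, k - 2))%:R < m.
Proof.
move=> k2 Hn hd1 hd2 hm.
have [F1 F2 F3 F4 A1] := nat_facts k2 Hn.
clear Hn.
have d0 : 0 <= delta.
  apply: le_trans hd1; apply: divr_ge0; [|exact: ler0n].
  apply: mulr_ge0; [exact: ler0n | exact: ler0n].
set N := (n - (r + 1))%N in F1 F2 F3 hm *.
have NUM : ((32 * k ^ 2 * (k - 1) * (r + 1) ^ 2)%N)%:R < N%:R * (r%:R + delta).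
  case: r => [|r'] in N F1 F2 F3 F4 A1 hm *.
    have H := NUM_r0 (ltnW k2) F4 hd1 hd2.
    rewrite /N add0n exp1n muln1 add0r; exact: H.
  apply: NUM_rpos d0 _ A1 (WA_fact k r'.+1) F1; exact: ltn0Sn.
clear hd1 hd2.
set c := (n - r - 2)%N.
have hc1 : (c + 1 = N)%N by rewrite /c /N; lia.
have hc2 : (c + r = n - 2)%N by rewrite /c; lia.
have Hbin := binrat c (k - 2) r.
rewrite hc2 hc1 in Hbin.
set Q := ('C(n - 2, k - 2))%:R : rat in Hbin *.
set Qc := ('C(c, k - 2))%:R : rat in Hbin.
set P := ('C(N, k - 1))%:R : rat in hm *.
have Npos : (0 : rat) < N%:R by rewrite ltr0n; lia.
have Hhalf : (r * (k - 2))%:R / N%:R <= (1 / 2 : rat).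
  rewrite ler_pdivrMr; last exact: Npos.
  have F2' : ((2 * (r * (k - 2)))%N)%:R <= N%:R :> rat by rewrite ler_nat.
  rewrite natrM in F2'; lra.
have Q0 : 0 <= Q by exact: ler0n.
have Qc0 : 0 <= Qc by exact: ler0n.
have QQc : Q <= 2 * Qc.
  have : Q * (1 / 2) <= Qc.
    apply: le_trans Hbin; apply: ler_wpM2l; [exact: Q0 | lra].
  lra.
have H3 : N%:R * Qc = (k - 1)%:R * P.
  have E := mul_bin_diag N (k - 2).
  have e1 : N.-1 = c by rewrite -hc1 addn1.
  have e2 : (k - 2).+1 = (k - 1)%N by lia.
  rewrite e1 e2 in E.
  by rewrite /Qc /P -!natrM E.
have P0 : 0 < P.
  rewrite /P ltr0n bin_gt0; exact: F3.
set W := (16 * k ^ 2 * (r + 1) ^ 2)%N.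
have HX : ((32 * k ^ 2 * (k - 1) * (r + 1) ^ 2)%N)%:R = 2 * W%:R * (k - 1)%:R :> rat.
  rewrite /W -[2]/(2%N%:R) -!natrM; congr (_%:R); move: (k - 1)%N => z; lia.
rewrite HX in NUM.
set w := W%:R : rat in HX NUM *.
have w0 : 0 <= w by exact: ler0n.
have e1 : N%:R * (w * (2 * Qc)) = 2 * w * (k - 1)%:R * P.
  transitivity (2 * w * (N%:R * Qc)); first ring.
  rewrite H3; ring.
have e2 : 2 * w * (k - 1)%:R * P < N%:R * (r%:R + delta) * P.
  rewrite ltr_pM2r; [exact: NUM | exact: P0].
have e3 : N%:R * (r%:R + delta) * P <= N%:R * m.
  rewrite -mulrA; apply: ler_wpM2l; [exact: ltW | exact: hm].
have e4 : N%:R * (w * Q) <= N%:R * (w * (2 * Qc)).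
  apply: ler_wpM2l; [exact: ltW | apply: ler_wpM2l; [exact: w0 | exact: QQc]].
have : N%:R * (w * Q) < N%:R * m.
  apply: le_lt_trans e4 _; rewrite e1; exact: lt_le_trans e2 e3.
rewrite ltr_pM2l; [done | exact: Npos].
Qed.

Lemma core (n k r : nat) (F : {set {set 'I_n}}) :
  (2 <= k)%N -> {in F, forall A : {set 'I_n}, #|A| = k} ->
  0 < (#|F|)%:R :> rat ->
  ((16 * k ^ 2 * (r + 1) ^ 2)%N)%:R * ('C(n - 2, k - 2))%:R < (#|F|)%:R :> rat ->
  (#|F|)%:R ^+ 2 / (r + 1)%N%:R <= (Ifam F)%:R :> rat ->
  exists x : 'I_n, (#|F|)%:R / (4 * (r + 1)%N%:R) <= (#|star F x|)%:R :> rat.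
Proof.
move=> k2 HF mpos KF HI.
set m := (#|F|)%:R : rat in mpos KF HI *.
set R1 := (r + 1)%N%:R : rat in HI *.
set M0 := m / (4 * R1).
case: (boolP [exists x, M0 <= (#|star F x|)%:R]) => [/existsP [x Hx] | Hno].
  by exists x.
exfalso.
have Hlt : forall x, (#|star F x|)%:R < M0.
  move=> x; move/existsPn: Hno => /(_ x); rewrite ltNge; exact.
set d := fun x => (#|star F x|)%:R : rat.
have d0 : forall x, 0 <= d x by move=> x; exact: ler0n.
have R1p : 0 < R1 by rewrite ltr0n addn1.
have kp : (0 : rat) < k%:R by rewrite ltr0n; lia.
set t := m / (2 * k%:R * R1).
set Q := ('C(n - 2, k - 2))%:R : rat in KF.
set W := (16 * k ^ 2 * (r + 1) ^ 2)%N in KF.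
have Q0 : 0 <= Q by exact: ler0n.
have Bf : forall S : {set 'I_n}, \sum_(x in S) d x <= m + (#|S| * #|S|)%N%:R * Q.
  move=> S; have := bonf S HF; rewrite -(ler_nat rat) natrD !natrM natr_sum.
  by rewrite -natrM.
set T := [set x | t <= d x].
have sW : ((4 * k * (r + 1)) * (4 * k * (r + 1)) = W)%N by rewrite /W; lia.
have Tsmall : (#|T| < 4 * k * (r + 1))%N.
  rewrite ltnNge; apply/negP => HT.
  have [S [ST cS]] := sub_of_size HT.
  have H1 := Bf S; rewrite cS sW in H1.
  have H2 : \sum_(x in S) t <= \sum_(x in S) d x.
    apply: ler_sum => x xS; move/subsetP: ST => /(_ x xS); rewrite inE; exact.
  rewrite sumr_const cS in H2.
  have e : t *+ (4 * k * (r + 1)) = 2 * m.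
    rewrite -mulr_natr /t natrM natrM; field.
    apply/andP; split; [by rewrite natr1 pnatr_eq0 | exact: lt0r_neq0].
  lra.
have sumT : \sum_(x in T) d x < 2 * m.
  apply: le_lt_trans (Bf T) _.
  have : (#|T| * #|T|)%N%:R * Q <= W%:R * Q.
    apply: ler_wpM2r; first exact: Q0.
    rewrite ler_nat -sW; apply: leq_mul; exact: ltnW.
  lra.
have Isum : (Ifam F)%:R = \sum_x d x ^+ 2.
  by rewrite Ifam_sum natr_sum; apply: eq_bigr => x _; rewrite natrX.
have Dsum : \sum_x d x = k%:R * m.
  by rewrite /d -natr_sum (sumdeg HF) natrM.
rewrite Isum (bigID (fun x => x \in T)) /= in HI.
rewrite (bigID (fun x => x \in T)) /= in Dsum.
have U1 : \sum_(x in T) d x ^+ 2 <= \sum_(x in T) M0 * d x.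
  apply: ler_sum => x _; rewrite expr2; apply: ler_wpM2r; [exact: d0 | exact: ltW (Hlt x)].
have U2 : \sum_(x | x \notin T) d x ^+ 2 <= \sum_(x | x \notin T) t * d x.
  apply: ler_sum => x; rewrite inE -ltNge => xT; rewrite expr2; apply: ler_wpM2r; [exact: d0 | exact: ltW xT].
rewrite -mulr_sumr in U1; rewrite -mulr_sumr in U2.
have P1 : 0 <= \sum_(x in T) d x by apply: sumr_ge0 => x _; exact: d0.
have P2 : 0 <= \sum_(x | x \notin T) d x by apply: sumr_ge0 => x _; exact: d0.
have M0p : 0 < M0 by rewrite /M0 divr_gt0 // mulr_gt0.
have tp : 0 <= t by rewrite /t divr_ge0 // ?mulr_ge0 // ltW.
have V1 : M0 * \sum_(x in T) d x < M0 * (2 * m) by rewrite ltr_pM2l.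
have V2 : t * \sum_(x | x \notin T) d x <= t * (k%:R * m).
  apply: ler_wpM2l; first exact: tp. lra.
have e1 : M0 * (2 * m) = m ^+ 2 / (2 * R1).
  rewrite /M0; field; by rewrite natr1 pnatr_eq0.
have e2 : t * (k%:R * m) = m ^+ 2 / (2 * R1).
  rewrite /t; field; by rewrite natr1 pnatr_eq0 (lt0r_neq0 kp).
have e3 : m ^+ 2 / R1 = m ^+ 2 / (2 * R1) + m ^+ 2 / (2 * R1).
  field; by rewrite natr1 pnatr_eq0.
lra.
Qed.

Lemma ratio_bound (r : nat) (d : rat) : 0 < d -> d <= 1 ->
  1 / (r + 1)%N%:R <= (r%:R + d ^+ 2) / (r%:R + d) ^+ 2.
Proof.
move=> d0 d1.
have rp : 0 <= r%:R :> rat by exact: ler0n.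
have up : 0 < (r%:R + d) ^+ 2 by apply: exprn_gt0; lra.
have R1p : 0 < (r + 1)%N%:R :> rat by rewrite ltr0n addn1.
rewrite ler_pdivlMr; last exact: up.
rewrite mul1r ler_pdivrMl; last exact: R1p.
rewrite natrD.
have : 0 <= r%:R * (1 - d) ^+ 2 by apply: mulr_ge0; [exact: rp | exact: sqr_ge0].
nra.
Qed.

Theorem lemma2p1 :
  exists C0 : rat, 3000 <= C0 /\
  forall (k r n : nat) (F : {set {set 'I_n}}) (delta : rat),
    (2 <= k)%N ->
    C0 * (((r + 1) ^ 3 * (k + r) * k ^ 2)%N)%:R <= n%:R ->
    {in F, forall A : {set 'I_n}, #|A| = k} ->
    150 * (k ^ 3)%:R / n%:R <= delta -> delta <= 1 ->
    (#|F|)%:R = \sum_(1 <= i < r.+1) ('C(n - i, k - 1))%:R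
                + delta * ('C(n - (r + 1), k - 1))%:R ->
    (r%:R + delta ^+ 2) / (r%:R + delta) ^+ 2 * (#|F|)%:R ^+ 2 <= (Ifam F)%:R ->
    exists x : 'I_n, (#|F|)%:R / (4 * (r + 1)%N%:R) <= (#|star F x|)%:R :> rat.
Proof.
exists 3000; split; first exact: lexx.
move=> k r n F delta k2 hC HF hd1 hd2 hsize hI.
have Hn : (3000 * ((r + 1) ^ 3 * (k + r) * k ^ 2) <= n)%N.
  rewrite -(ler_nat rat) natrM; exact: hC.
clear hC.
have [F1 F2 F3 F4 A1] := nat_facts k2 Hn.
set P := ('C(n - (r + 1), k - 1))%:R : rat in hsize.
set m := (#|F|)%:R : rat in hsize hI *.
have P0 : 0 < P by rewrite /P ltr0n bin_gt0; exact: F3.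
have Ssum : P *+ r <= \sum_(1 <= i < r.+1) ('C(n - i, k - 1))%:R.
  have -> : P *+ r = \sum_(1 <= i < r.+1) P by rewrite sumr_const_nat subn1.
  apply: ler_sum_nat => i /andP [i1 ir].
  rewrite ler_nat; apply: leq_bin2l; lia.
have hm : (r%:R + delta) * P <= m.
  rewrite hsize mulrDl mulr_natl; lra.
have np : (0 : rat) < n%:R by rewrite ltr0n; lia.
have dpos : 0 < delta.
  apply: (lt_le_trans _ hd1); apply: divr_gt0; last exact: np.
  apply: mulr_gt0; first by rewrite ltr0n.
  rewrite ltr0n expn_gt0; apply/orP; left; lia.
have KF := KF_lemma k2 Hn hd1 hd2 hm.
have mpos : 0 < m.
  apply: (lt_le_trans _ hm); apply: mulr_gt0; last exact: P0.
  have : 0 <= r%:R :> rat by exact: ler0n.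
  lra.
apply: core k2 HF mpos KF _.
apply: (le_trans _ hI).
have := ratio_bound r dpos hd2.
move=> HR.
have HR2 := ler_wpM2r (sqr_ge0 m) HR.
apply: (le_trans _ HR2); rewrite -/m div1r mulrC; exact: lexx.
Qed.
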